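(* Let $X_1,X_2,\dots$ be iid random variables with a light right tail, $S_k=X_1+\dots+X_k$, and let $Y$ be independent of $(X_k)$ and satisfy condition $(\mathrm{P})$ with constant $a>0$. In case (ii) of the light-tail definition (i.e. $X_1\le A$ a.s. and $P(X_1>\alpha)>0$) assume additionally $a\le\alpha$. Then for every $k\ge1$, $$\lim_{u\to\infty}\frac{P(Y+S_k>u)}{P(Y+S_{k+1}>u)}=0.$$
   Context: A random variable $X$ has a light right tail if either (i) $P(X>u)>0$ for all $u>0$ and $\lim_{u\to\infty}P(X_1>u)/P(X_1+X_2>u)=0$, where $X_1,X_2$ are independent copies of $X$; or (ii) there are constants $A>0,\alpha>0$ with $X\le A$ a.s. and $P(X>\alpha)>0$. A random variable $Y$ satisfies condition $(\mathrm{P})$ with constant $a>0$ if $P(Y>u)>0$ for all $u>0$ and $\lim_{u\to\infty}P(Y>u+a)/P(Y>u)=0$. *)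

(* Defs.v *)
From HB Require Import structures.
From mathcomp Require Import all_boot all_order all_algebra.
From mathcomp Require Import all_classical all_reals all_analysis.
Set Implicit Arguments. Unset Strict Implicit. Unset Printing Implicit Defensive.
Import Order.TTheory GRing.Theory Num.Theory.
Import numFieldNormedType.Exports.
Local Open Scope classical_set_scope.
Local Open Scope ring_scope.

Definition prob d (T : measurableType d) (R : realType) (P : probability T R)
  (A : set T) : R := fine (P A).

Definition mutually_independent d (T : measurableType d) (R : realType)
  (P : probability T R) (I : eqType) (Z : I -> T -> R) : Prop :=
  forall (J : seq I) (B : I -> set R),
    uniq J -> (forall j, measurable (B j)) ->
    prob P (\bigcap_(j in [set` J]) (Z j @^-1` B j)) =
    \prod_(j <- J) prob P (Z j @^-1` B j).

Definition law d (T : measurableType d) (R : realType) (P : probability T R)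
  (X : {RV P >-> R}) := distribution P X.
Arguments law {d T R} P X.

(* P(X1 + X2 > u) for X1, X2 independent copies of X, computed on the product
   of the law of X with itself. *)
Definition tail_sum2 d (T : measurableType d) (R : realType)
  (P : probability T R) (X : {RV P >-> R}) (u : R) : R :=
  fine ((law P X \x law P X) [set xy : R * R | u < xy.1 + xy.2]).
Arguments tail_sum2 {d T R} P X u.

Definition light_tail_i d (T : measurableType d) (R : realType)
  (P : probability T R) (X : {RV P >-> R}) : Prop :=
  (forall u : R, 0 < u -> 0 < prob P [set t | u < X t]) /\
  (prob P [set t | u < X t] / tail_sum2 P X u) @[u --> +oo] --> 0.

Definition light_tail_ii d (T : measurableType d) (R : realType)
  (P : probability T R) (X : T -> R) (A alpha : R) : Prop :=
  0 < A /\ 0 < alpha /\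
  P.-negligible [set t | A < X t] /\ 0 < prob P [set t | alpha < X t].

Definition condP d (T : measurableType d) (R : realType)
  (P : probability T R) (Y : T -> R) (a : R) : Prop :=
  0 < a /\
  (forall u : R, 0 < u -> 0 < prob P [set t | u < Y t]) /\
  (prob P [set t | u + a < Y t] / prob P [set t | u < Y t]) @[u --> +oo] --> 0.

Definition join_family (T R : Type) (Y : T -> R) (X : nat -> T -> R)
  : option nat -> T -> R :=
  fun o => match o with None => Y | Some i => X i end.

(* S_k = X_1 + ... + X_k, with X_1 = X 0 (0-based indexing). *)
Definition partial_sum (T : Type) (R : realType) (X : nat -> T -> R) (k : nat)
  (t : T) : R := \sum_(i < k) X i t.

(* Main.v *)
Require Import Defs.
From HB Require Import structures.
From mathcomp Require Import all_boot all_order all_algebra.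
From mathcomp Require Import all_classical all_reals all_analysis.
From mathcomp Require Import measurable_realfun.
From mathcomp Require Import lra.
Import Order.TTheory GRing.Theory Num.Theory.
Import numFieldNormedType.Exports.
Local Open Scope classical_set_scope.
Local Open Scope ring_scope.

Section Indep.
Set Implicit Arguments. Unset Strict Implicit.
Context d (T : measurableType d) (R : realType) (P : probability T R).
Variable Z : option nat -> T -> R.
Hypothesis mZ : forall i, measurable_fun setT (Z i).
Hypothesis indZ : mutually_independent P Z.

Lemma probE (A : set T) : measurable A -> P A = (prob P A)%:E.
Proof.
move=> mA; rewrite /prob fineK // ge0_fin_numE ?measure_ge0 //.
exact: (le_lt_trans (probability_le1 P mA) (ltry _)).
Qed.

Definition pis (I : set (option nat)) : set (set T) :=
  [set E | exists (J : seq (option nat)) (B : option nat -> set R),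
     [/\ uniq J, (forall j, j \in J -> I j), (forall j, measurable (B j)) &
      E = \bigcap_(j in [set` J]) (Z j @^-1` B j)]].

Lemma pis_meas I E : pis I E -> measurable E.
Proof.
move=> [J [B [_ _ mB ->]]]; rewrite bigcap_seq; apply: bigsetI_measurable => j _.
by rewrite -[X in measurable X]setTI; apply: mZ.
Qed.

Lemma pis_setI I : setI_closed (pis I).
Proof.
move=> E1 E2 [J1 [B1 [u1 s1 m1 ->]]] [J2 [B2 [u2 s2 m2 ->]]].
exists (J1 ++ [seq j <- J2 | j \notin J1]).
exists (fun j => (if j \in J1 then B1 j else setT) `&` (if j \in J2 then B2 j else setT)).
split.
- rewrite cat_uniq u1 filter_uniq // andbT; apply/hasPn => j.
  by rewrite mem_filter => /andP[].
- move=> j; rewrite mem_cat mem_filter => /orP[/s1//|/andP[_ /s2//]].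
- by move=> j; apply: measurableI; case: ifP.
- apply/seteqP; split => t /=.
  + move=> [h1 h2] j _ /=; split; case: ifP => // jJ.
    * exact: h1.
    * exact: h2.
  + move=> h; split => j jJ.
    * have [] := h j; first by rewrite /= mem_cat jJ.
      by rewrite /= jJ.
    * have jJ' : j \in J1 ++ [seq j <- J2 | j \notin J1].
        by rewrite mem_cat mem_filter jJ andbT orbN.
      by have [] := h j jJ'; rewrite /= jJ.
Qed.

Lemma pis_indep I1 I2 (disj : forall j, I1 j -> I2 j -> False) E1 E2 :
  pis I1 E1 -> pis I2 E2 -> prob P (E1 `&` E2) = prob P E1 * prob P E2.
Proof.
move=> [J1 [B1 [u1 s1 m1 ->]]] [J2 [B2 [u2 s2 m2 ->]]].
have nJ j : j \in J2 -> j \notin J1.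
  by move=> j2; apply/negP => j1; apply: (disj j); [apply: s1|apply: s2].
rewrite [X in prob P X](_ : _ = \bigcap_(j in [set` J1 ++ J2])
   Z j @^-1` (if j \in J1 then B1 j else B2 j)); last first.
  apply/seteqP; split => t /=.
  - move=> [h1 h2] j jJ; have {jJ} : j \in J1 ++ J2 := jJ.
    rewrite mem_cat => /orP[jJ|jJ]; rewrite /=.
    + by rewrite jJ; apply: h1.
    + by rewrite (negbTE (nJ _ jJ)); apply: h2.
  - move=> h; split => j jJ.
    + have jJ' : j \in J1 ++ J2 by rewrite mem_cat jJ.
      by have := h j jJ'; rewrite /= jJ.
    + have jJ' : j \in J1 ++ J2 by rewrite mem_cat jJ orbT.
      by have := h j jJ'; rewrite /= (negbTE (nJ _ jJ)).
rewrite indZ; last by move=> j; case: ifP.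
  rewrite (indZ u1 m1) (indZ u2 m2) big_cat /=.
  congr (_ * _).
  - by apply: eq_big_seq => j ->.
  - by apply: eq_big_seq => j /nJ /negbTE ->.
rewrite cat_uniq u1 u2 andbT /=.
by apply/hasPn => j /nJ.
Qed.

Local Open Scope ereal_scope.
Lemma dyn_ext (G : set (set T)) (GI : setI_closed G) (H : set T) :
  measurable H ->
  (forall E, G E -> measurable E /\ P (E `&` H) = P E * P H) ->
  forall E, <<s G >> E -> P (E `&` H) = P E * P H.
Proof.
move=> mH GH E sE.
pose T' := g_sigma_algebraType G.
suff : measurable (E : set T) /\ P (E `&` H) = P E * P H by case.
apply: (@dynkin_induction _ T' G
  (fun E : set T' => measurable (E : set T) /\ P (E `&` H) = P E * P H)) => //.
- by split; [exact: measurableT|rewrite setTI probability_setT mul1e].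
- move=> S _ [mS eS]; split; first exact: measurableC.
  have eS' : P (H `&` S) = P S * P H by rewrite setIC; exact: eS.
  have hD : P (H `\` S) = P H - P (H `&` S).
    by rewrite measureD // (le_lt_trans (probability_le1 P mH) (ltry _)).
  rewrite probability_setC // setIC -setDE hD eS' (probE mS) (probE mH).
  rewrite -!EFinM -!EFinB; congr EFin.
  by rewrite mulrBl mul1r.
- move=> F mF tF QF; split.
    by apply: bigcupT_measurable => n; have [] := QF n.
  have mF' n : measurable (F n : set T) by have [] := QF n.
  rewrite setI_bigcupl.
  rewrite (measure_bigcup P setT (fun n => F n `&` H)); last first.
  + by apply: trivIset_setIr.
  + by move=> n _; apply: measurableI.
  rewrite (measure_bigcup P setT F) //.
  rewrite (probE mH) muleC -nneseriesZl; last by move=> n _; exact: measure_ge0.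
  apply: eq_eseriesr => n _; have [_ e] := QF n.
  by transitivity (P (F n) * P H); [exact: e|rewrite (probE mH) muleC].
Qed.
Local Close Scope ereal_scope.

Definition sig I := <<s pis I >>.

Lemma sig_meas I E : sig I E -> measurable E.
Proof.
apply: smallest_sub; first exact: sigma_algebra_measurable.
by move=> A /pis_meas.
Qed.

Lemma sig_indep I1 I2 (disj : forall j, I1 j -> I2 j -> False) E1 E2 :
  sig I1 E1 -> sig I2 E2 -> (P (E1 `&` E2) = P E1 * P E2)%E.
Proof.
have step1 F2 : pis I2 F2 -> forall F1, sig I1 F1 -> (P (F1 `&` F2) = P F1 * P F2)%E.
  move=> pF2; apply: (dyn_ext (@pis_setI I1) (pis_meas pF2)).
  move=> E pE; split; first exact: pis_meas pE.
  rewrite probE; last by apply: measurableI; apply: pis_meas; eauto.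
  by rewrite (pis_indep disj pE pF2) EFinM -!probE //; apply: pis_meas; eauto.
move=> sE1 sE2; rewrite setIC muleC.
apply: (dyn_ext (@pis_setI I2) (sig_meas sE1)) sE2.
move=> E pE; split; first exact: pis_meas pE.
by rewrite setIC step1 // muleC.
Qed.

Definition TI (I : set (option nat)) := g_sigma_algebraType (pis I).

Lemma mZI I i : I i -> measurable_fun setT (Z i : TI I -> R).
Proof.
move=> Ii _ B mB; rewrite setTI; apply: sub_sigma_algebra.
exists [:: i], (fun j => if j == i then B else setT); split => //.
- by move=> j; rewrite inE => /eqP ->.
- by move=> j; case: ifP.
- apply/seteqP; split => t /=.
  + move=> Bt j jJ; have {jJ} : j \in [:: i] := jJ.
    by rewrite inE => /eqP ->; rewrite /= eqxx.
  + move=> h; have := h i; rewrite /= eqxx; apply; by rewrite /= inE.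
Qed.

Lemma mTI I (f : TI I -> R) : measurable_fun setT f -> measurable_fun setT (f : T -> R).
Proof.
move=> mf _ B mB; apply: sig_meas; exact: (mf measurableT B mB).
Qed.

Lemma sigI I (f : TI I -> R) : measurable_fun setT f -> forall B, measurable B ->
  sig I (f @^-1` B).
Proof. by move=> mf B mB; have := mf measurableT B mB; rewrite setTI. Qed.

Local Open Scope ereal_scope.

Definition lawf (f : T -> R) (mf : measurable_fun setT f) : probability R R :=
  distribution P (mfun_Sub (mem_set mf : f \in mfun)).

Lemma lawE (f : T -> R) (mf : measurable_fun setT f) A : lawf mf A = P (f @^-1` A).
Proof. by []. Qed.

Lemma measurable_gt_sum (w : R) : measurable [set p : R * R | (w < p.1 + p.2)%R].
Proof.
have := (measurable_realfun.measurable_funD (@measurable_fst _ _ R R) (@measurable_snd _ _ R R))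
  measurableT _ (measurable_itv `]w, +oo[).
rewrite setTI; congr measurable; apply/seteqP; split => p /=;
  by rewrite in_itv /= andbT.
Qed.

Lemma conv I1 I2 (disj : forall j, I1 j -> I2 j -> False) (f g : T -> R)
  (mf1 : measurable_fun setT (f : TI I1 -> R))
  (mg1 : measurable_fun setT (g : TI I2 -> R)) (w : R) :
  P [set t | (w < f t + g t)%R] =
  \int[lawf (mTI mf1)]_x P [set t | (w < x + g t)%R].
Proof.
have mf := mTI mf1; have mg := mTI mg1.
have mfg : measurable_fun setT (fun t => (f t, g t)) := measurable_fun_pair mf mg.
pose m' := distribution P (mfun_Sub (mem_set mfg : _ \in mfun)).
have hyp : forall A B, measurable A -> measurable B ->
    m' (A `*` B) = lawf (mTI mf1) A * lawf mg B.
  move=> A B mA mB; rewrite !lawE.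
  transitivity (P (f @^-1` A `&` g @^-1` B)); first reflexivity.
  have h1 : sig I1 (f @^-1` A) := sigI mf1 mA.
  have h2 : sig I2 (g @^-1` B) := sigI mg1 mB.
  exact: (sig_indep disj h1 h2).
have e := product_measure_unique hyp (measurable_gt_sum w).
rewrite (_ : P _ =
  (lawf (mTI mf1) \x lawf mg) [set p : R * R | (w < p.1 + p.2)%R]); last by rewrite e; reflexivity.
rewrite /product_measure1 /=.
apply: eq_integral => x _ /=; rewrite lawE; congr (P _).
by apply/seteqP; split => t /=; rewrite /xsection /= inE.
Qed.

Lemma mgt (h : T -> R) (mh : measurable_fun setT h) (c : R) :
  measurable [set t | (c < h t)%R].
Proof.
have := mh measurableT _ (measurable_itv `]c, +oo[).
by rewrite setTI; congr measurable; apply/seteqP; split => t /=;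
  rewrite in_itv /= andbT.
Qed.

Lemma mphi (g : T -> R) (mg : measurable_fun setT g) (w : R) :
  measurable_fun setT (fun x : R => P [set t | (w < x + g t)%R]).
Proof.
apply: (eq_measurable_fun _ _ (measurable_fun_xsection (lawf mg) (measurable_gt_sum w))).
move=> x _ /=; rewrite lawE; congr (P _).
by apply/seteqP; split => t /=; rewrite /xsection /= inE.
Qed.

Lemma split_ineq I1 I2 I3 (d12 : forall j, I1 j -> I2 j -> False)
  (d13 : forall j, I1 j -> I3 j -> False) (f g1 g2 : T -> R)
  (mf1 : measurable_fun setT (f : TI I1 -> R))
  (mg1 : measurable_fun setT (g1 : TI I2 -> R))
  (mg2 : measurable_fun setT (g2 : TI I3 -> R)) (eps y0 : R) :
  (0 <= eps)%R ->
  (forall y, (y0 <= y)%R ->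
     P [set t | (y < g1 t)%R] <= eps%:E * P [set t | (y < g2 t)%R]) ->
  forall w : R,
  P [set t | (w < f t + g1 t)%R] <=
  eps%:E * P [set t | (w < f t + g2 t)%R] + P [set t | (w - y0 < f t)%R].
Proof.
move=> e0 H w.
have mg1' := mTI mg1; have mg2' := mTI mg2.
rewrite (conv d12 mf1 mg1) (conv d13 mf1 mg2).
set mu := lawf (mTI mf1).
have mS : measurable (`](w - y0)%R, +oo[%classic : set R) by exact: measurable_itv.
have -> : P [set t | (w - y0 < f t)%R] =
    \int[mu]_x (\1_(`](w - y0)%R, +oo[%classic : set R) x)%:E.
  rewrite integral_indic // setIT.
  transitivity (P (f @^-1` (`](w - y0)%R, +oo[%classic : set R))); last reflexivity.
  by congr (P _); apply/seteqP; split => t /=; rewrite in_itv /= andbT.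
have mp2 := mphi mg2' w.
have E1 : eps%:E * \int[mu]_x P [set t | (w < x + g2 t)%R] =
    \int[mu]_x (eps%:E * P [set t | (w < x + g2 t)%R]).
  rewrite ge0_integralZl //; do ?[exact: mp2 | by move=> ? _; exact: measure_ge0 | by rewrite lee_fin].
rewrite E1 -ge0_integralD //; do ?[
  by move=> x _; apply: mule_ge0; [rewrite lee_fin|exact: measure_ge0] |
  by apply: emeasurable_funM; [exact: measurable_cst|exact: mp2] |
  by move=> x _; rewrite lee_fin |
  by apply/measurable_EFinP; exact: measurable_indic ].
have mp1 := mphi mg1' w.
apply: ge0_le_integral; do ?[ exact: measurableT |
  by move=> x _; exact: measure_ge0 | exact: mp1 |
  by apply: emeasurable_funD; [apply: emeasurable_funM; [exact: measurable_cst|exact: mp2]|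
     apply/measurable_EFinP; exact: measurable_indic]].
move=> x _.
have eq1 (g : T -> R) : [set t | (w < x + g t)%R] = [set t | (w - x < g t)%R].
  by apply/seteqP; split => t /=; rewrite ltrBlDl.
case: (leP y0 (w - x)%R) => hx.
- rewrite !eq1; apply: (le_trans (H _ hx)); rewrite leeDl // lee_fin.
- have xS : x \in (`](w - y0)%R, +oo[%classic : set R).
    by rewrite inE /= in_itv /= andbT; rewrite ltrBlDr -ltrBlDl.
  rewrite indicE xS /= addeC; apply: (le_trans (probability_le1 P _)).
    by rewrite eq1; exact: mgt.
  by rewrite leeDl // mule_ge0 // ?lee_fin // measure_ge0.
Qed.

Lemma prod_law I1 I2 (disj : forall j, I1 j -> I2 j -> False) (f g : T -> R)
  (mf1 : measurable_fun setT (f : TI I1 -> R))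
  (mg1 : measurable_fun setT (g : TI I2 -> R)) (m1 m2 : probability R R) :
  (forall A, measurable A -> m1 A = P (f @^-1` A)) ->
  (forall A, measurable A -> m2 A = P (g @^-1` A)) ->
  forall w : R,
  (m1 \x m2) [set p : R * R | (w < p.1 + p.2)%R] = P [set t | (w < f t + g t)%R].
Proof.
move=> h1 h2 w.
have mf := mTI mf1; have mg := mTI mg1.
have mfg : measurable_fun setT (fun t => (f t, g t)) := measurable_fun_pair mf mg.
pose m' := distribution P (mfun_Sub (mem_set mfg : _ \in mfun)).
have hyp : forall A B, measurable A -> measurable B -> m' (A `*` B) = m1 A * m2 B.
  move=> A B mA mB; rewrite h1 // h2 //.
  transitivity (P (f @^-1` A `&` g @^-1` B)); first reflexivity.
  have hA : sig I1 (f @^-1` A) := sigI mf1 mA.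
  have hB : sig I2 (g @^-1` B) := sigI mg1 mB.
  exact: (sig_indep disj hA hB).
have e := product_measure_unique hyp (measurable_gt_sum w).
by rewrite e; reflexivity.
Qed.

End Indep.

Section Ev.
Context (R : realType).

Lemma ratio_ev (f g : R -> R) : (f u / g u) @[u --> +oo] --> 0 ->
  (forall u, 0 < u -> 0 < g u) ->
  forall eps, 0 < eps -> exists M, forall u, M <= u -> f u <= eps * g u.
Proof.
move=> /cvgr0Pnorm_le H gpos eps e0.
have [M [Mr HM]] := H eps e0.
exists (`|M| + 1) => u Mu.
have Mu' : M < u by apply: (le_lt_trans (ler_norm M)); apply: (lt_le_trans _ Mu); rewrite ltrDl.
have u0 : 0 < u by apply: (lt_le_trans _ Mu); rewrite ltr_pwDr // normr_ge0.
have := HM u Mu'; rewrite -ler_pdivrMr ?gpos //.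
by apply: le_trans; exact: ler_norm.
Qed.

Lemma ev_ratio (f g : R -> R) : (forall u, 0 <= f u) -> (forall u, 0 <= g u) ->
  (forall eps, 0 < eps -> exists M, forall u, M <= u -> f u <= eps * g u) ->
  (f u / g u) @[u --> +oo] --> 0.
Proof.
move=> f0 g0 H; apply/cvgr0Pnorm_le => eps e0.
have [M HM] := H eps e0.
exists M; split; first by rewrite num_real.
move=> u Mu; rewrite ger0_norm ?divr_ge0 //.
have [->|gn0] := eqVneq (g u) 0; first by rewrite invr0 mulr0 ltW.
rewrite ler_pdivrMr ?lt_neqAle ?g0 1?eq_sym ?gn0 //.
by apply: HM; apply: ltW.
Qed.

End Ev.

Definition bYS (j : nat) : set (option nat) :=
  [set o | o = None \/ exists2 i, (i < j)%N & o = Some i].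
Definition bS (j : nat) : set (option nat) :=
  [set o | exists2 i, (i < j)%N & o = Some i].
Definition b1 (j : nat) : set (option nat) := [set o | o = Some j].
Definition b2 (j : nat) : set (option nat) := [set o | o = Some j \/ o = Some j.+1].
Definition bY : set (option nat) := [set o | o = None].

Lemma prob_le d (T : measurableType d) (R : realType) (P : probability T R)
  (A B : set T) : measurable A -> measurable B -> A `<=` B -> prob P A <= prob P B.
Proof.
move=> mA mB AB; rewrite -lee_fin -!probE //.
by apply: le_measure => //; rewrite inE.
Qed.

Lemma prob_ge0 d (T : measurableType d) (R : realType) (P : probability T R)
  (A : set T) : 0 <= prob P A.
Proof. by rewrite /prob fine_ge0 // measure_ge0. Qed.

Section Main.
Set Implicit Arguments. Unset Strict Implicit.
Context d (T : measurableType d) (R : realType) (P : probability T R)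
  (X : nat -> {RV P >-> R}) (Y : {RV P >-> R}).
Hypothesis hid : forall (i : nat) (B : set R), measurable B ->
     P (X i @^-1` B) = P (X 0%N @^-1` B).
Hypothesis hind : mutually_independent P (join_family Y (fun i => X i : T -> R)).

Let Z := join_family Y (fun i => X i : T -> R).
Let mZ : forall i, measurable_fun setT (Z i).
Proof. by case => [i|] /=; exact: measurable_funPT. Qed.

Let S j : T -> R := partial_sum (fun i => X i : T -> R) j.
Let V j t := Y t + S j t.
Let TT j w := prob P [set t | w < V j t].
Let Fb c := prob P [set t | c < X 0%N t].

Lemma SS j t : S j.+1 t = S j t + X j t.
Proof. by rewrite /S /partial_sum big_ord_recr. Qed.

Lemma S0 t : S 0 t = 0.
Proof. by rewrite /S /partial_sum big_ord0. Qed.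

Lemma mS_I I j : (forall i, (i < j)%N -> I (Some i)) ->
  measurable_fun setT (S j : TI Z I -> R).
Proof.
move=> hI; rewrite /S /partial_sum.
apply: measurable_sum => i.
exact: (mZI (Z := Z) (I := I) (i := Some (i : nat)) (hI _ (ltn_ord i))).
Qed.

Lemma mV j : measurable_fun setT (V j : TI Z (bYS j) -> R).
Proof.
apply: measurable_realfun.measurable_funD.
  by apply: (mZI (Z := Z) (I := bYS j) (i := None)); left.
by apply: mS_I => i ij; right; exists i.
Qed.

Lemma sig_gt I (f : TI Z I -> R) : measurable_fun setT f -> forall c : R,
  sig Z I [set t | c < f t].
Proof.
move=> mf c; have := sigI mf (measurable_itv `]c, +oo[).
by congr (sig Z I); apply/seteqP; split => t /=; rewrite in_itv /= andbT.
Qed.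

Lemma mgtT I (f : TI Z I -> R) : measurable_fun setT f -> forall c : R,
  measurable [set t | c < (f : T -> R) t].
Proof. by move=> mf c; exact: (mgt (mTI mZ mf)). Qed.

Lemma Fb_eq j c : prob P [set t | c < X j t] = Fb c.
Proof.
have := hid j (measurable_itv `]c, +oo[).
rewrite /Fb /prob => e.
transitivity (fine (P (X j @^-1` `]c, +oo[))).
  by congr (fine (P _)); apply/seteqP; split => t /=; rewrite in_itv /= andbT.
rewrite e; congr (fine (P _)).
by apply/seteqP; split => t /=; rewrite in_itv /= andbT.
Qed.

Lemma ineq1 j w c : TT j (w - c) * Fb c <= TT j.+1 w.
Proof.
have mVj := @mV j.
have mXj : measurable_fun setT ((X j : T -> R) : TI Z (b1 j) -> R).
  by apply: (mZI (Z := Z) (I := b1 j) (i := Some j)).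
have E1 := sig_gt mVj (w - c).
have E2 := sig_gt mXj c.
have disj : forall o, bYS j o -> b1 j o -> False.
  move=> o [->|[i ij ->]] //= [ei]; by move: ij; rewrite ei ltnn.
have := sig_indep mZ hind disj E1 E2.
rewrite /TT -(Fb_eq j) => e.
rewrite -lee_fin EFinM -!probE; last 2 first.
- exact: mgtT mXj c.
- exact: mgtT mVj (w - c).
rewrite -e; apply: le_measure; rewrite ?inE.
- by apply: measurableI; [exact: mgtT mVj (w - c)|exact: mgtT mXj c].
- exact: mgtT (@mV j.+1) w.
move=> t /= [h1 h2]; rewrite /V SS addrA.
by rewrite -(subrK c w) ltrD.
exact: mgtT (@mV j.+1) w.
Qed.

Lemma mono j w1 w2 : w1 <= w2 -> TT j w2 <= TT j w1.
Proof.
move=> le12; apply: prob_le; [exact: mgtT (@mV j) w2|exact: mgtT (@mV j) w1|].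
by move=> t /=; apply: le_lt_trans.
Qed.

Let F2 y := tail_sum2 P (X 0%N) y.

Lemma mXI I j : I (Some j) -> measurable_fun setT ((X j : T -> R) : TI Z I -> R).
Proof. by move=> h; apply: (mZI (Z := Z) (I := I) (i := Some j)). Qed.

Lemma F2_eq j y : prob P [set t | y < X j t + X j.+1 t] = F2 y.
Proof.
have disj : forall o, b1 j o -> b1 j.+1 o -> False.
  by move=> o -> [] /eqP; rewrite -[j.+1]addn1 -{1}[j]addn0 eqn_add2l.
have h A : measurable A -> law P (X 0%N) A = P (X j @^-1` A).
  by move=> mA; rewrite hid.
have h' A : measurable A -> law P (X 0%N) A = P (X j.+1 @^-1` A).
  by move=> mA; rewrite hid.
rewrite /F2 /tail_sum2.
rewrite (prod_law mZ hind disj (@mXI (b1 j) j erefl) (@mXI (b1 j.+1) j.+1 erefl) h h').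
by [].
Qed.

Lemma split1 eps v0 : 0 <= eps -> (forall y, v0 <= y -> Fb y <= eps * F2 y) ->
  forall j w, TT j.+1 w <= eps * TT j.+2 w + TT j (w - v0).
Proof.
move=> e0 H j w.
have d12 : forall o, bYS j o -> b1 j o -> False.
  move=> o [->|[i ij ->]] //= [ei]; by move: ij; rewrite ei ltnn.
have d13 : forall o, bYS j o -> b2 j o -> False.
  move=> o [->|[i ij ->]] /=; first by case.
  by case => -[ei]; move: ij; rewrite ei ?ltnn // ltnNge leqnSn.
have mX2 : measurable_fun setT ((fun t => X j t + X j.+1 t) : TI Z (b2 j) -> R).
  by apply: measurable_realfun.measurable_funD; apply: mXI; [left|right].
have H' : forall y, v0 <= y -> (P [set t | (y < X j t)%R] <=
    eps%:E * P [set t | (y < X j t + X j.+1 t)%R])%E.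
  move=> y vy; rewrite !probE; last 2 first.
  - exact: mgtT mX2 y.
  - exact: mgtT (@mXI (b1 j) j erefl) y.
  by rewrite -EFinM lee_fin Fb_eq F2_eq; apply: H.
have := split_ineq mZ hind d12 d13 (@mV j) (@mXI (b1 j) j erefl) mX2 e0 H' w.
rewrite !probE; last 3 first.
- exact: mgtT (@mV j) (w - v0).
- exact: (mgt (measurable_funD (mTI mZ (@mV j)) (mTI mZ mX2))).
- exact: (mgt (measurable_funD (mTI mZ (@mV j)) (mTI mZ (@mXI (b1 j) j erefl)))).
rewrite -EFinM -EFinD lee_fin /TT.
have -> : [set t | w < V j t + X j t] = [set t | w < V j.+1 t].
  by apply/seteqP; split => t /=; rewrite /V SS addrA.
have -> : [set t | w < V j t + (X j t + X j.+1 t)] = [set t | w < V j.+2 t].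
  by apply/seteqP; split => t /=; rewrite /V !SS !addrA.
by [].
Qed.

Lemma mSk k : measurable_fun setT (S k : T -> R).
Proof. by apply: (mTI mZ (@mS_I (bS k) k _)) => i ik; exists i. Qed.

Lemma Sk_null A : P.-negligible [set t | A < X 0%N t] ->
  forall k, (P [set t | (k%:R * A < S k t)%R] = 0)%E.
Proof.
move=> [N [mN PN sub]].
have hk j : (P [set t | (A < X j t)%R] = 0)%E.
  have e := hid j (measurable_itv `]A, +oo[).
  transitivity (P (X j @^-1` `]A, +oo[)).
    by congr (P _); apply/seteqP; split => t /=; rewrite in_itv /= andbT.
  rewrite e; apply/eqP; rewrite eq_le measure_ge0 andbT -PN.
  apply: le_measure; rewrite ?inE //; first exact: measurable_funPTI.
  by move=> t /=; rewrite in_itv /= andbT => /sub.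
elim => [|k IH].
  rewrite (_ : [set t | _] = set0) ?measure0 //.
  by apply/seteqP; split => t //=; rewrite S0 mul0r ltxx.
apply/eqP; rewrite eq_le measure_ge0 andbT.
have m1 := mgt (mSk k) (k%:R * A).
have m2 : measurable [set t | A < X k t] by exact: (mgt (@measurable_funPT _ _ _ _ (X k))).
apply: (@le_trans _ _ (P ([set t | k%:R * A < S k t] `|` [set t | A < X k t]))).
  apply: le_measure; rewrite ?inE //; first exact: mgt (mSk k.+1) _.
  - exact: measurableU.
  - move=> t /=; rewrite SS => h.
    case: (ltP (k%:R * A) (S k t)) => h1; [by left|right].
    rewrite ltNge; apply/negP => h2.
    move: h; rewrite ltNge => /negP; apply.
    by rewrite -nat1r mulrDl mul1r addrC; exact: lerD.
apply: (le_trans (measureU2 _ m1 m2)).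
have e1 : (P [set t | (k%:R * A < S k t)%R] <= 0)%E by rewrite IH.
have e2 : (P [set t | (A < X k t)%R] <= 0)%E by rewrite hk.
by rewrite -(adde0 0%E); apply: leeD; [exact: e1|exact: e2].
Qed.

Lemma case_ii A alpha a k : light_tail_ii P (X 0%N) A alpha -> a <= alpha ->
  (forall u : R, 0 < u -> 0 < prob P [set t | u < Y t]) ->
  (prob P [set t | u + a < Y t] / prob P [set t | u < Y t]) @[u --> +oo] --> 0 ->
  forall eps, 0 < eps -> exists M, forall u, M <= u -> TT k u <= eps * TT k.+1 u.
Proof.
move=> [A0 [al0 [hneg Fpos]]] aal Ypos Ylim eps e0.
have F0 : 0 < Fb alpha by [].
have e10 : 0 < eps * Fb alpha by apply: mulr_gt0.
have [y0' Hy] := ratio_ev (f := fun u => prob P [set t | u + a < Y t])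
  (g := fun u => prob P [set t | u < Y t]) Ylim Ypos e10.
have mY : measurable_fun setT ((Y : T -> R) : TI Z bY -> R).
  exact: (mZI (Z := Z) (I := bY) (i := None)).
have mYa : measurable_fun setT ((fun t => Y t + alpha) : TI Z bY -> R).
  by apply: measurable_realfun.measurable_funD => //; exact: measurable_cst.
have mYT := mTI mZ mY; have mYaT := mTI mZ mYa.
have d12 : forall o, bS k o -> bY o -> False by move=> o [i _ ->].
have mSI : measurable_fun setT (S k : TI Z (bS k) -> R).
  by apply: mS_I => i ik; exists i.
have H' : forall y, y0' + alpha <= y -> (P [set t | (y < Y t)%R] <=
    (eps * Fb alpha)%:E * P [set t | (y < Y t + alpha)%R])%E.
  move=> y hy; rewrite !probE; last 2 first.
  - exact: mgt mYaT y.
  - exact: mgt mYT y.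
  rewrite -EFinM lee_fin.
  apply: (@le_trans _ _ (prob P [set t | (y - alpha) + a < Y t])).
    apply: prob_le; [exact: mgt mYT y|exact: mgt mYT (y - alpha + a)|].
    move=> t /= h; apply: le_lt_trans h.
    by rewrite -addrA gerDl addrC subr_le0.
  rewrite (_ : [set t | y < Y t + alpha] = [set t | y - alpha < Y t]).
    by apply: Hy; rewrite lerBrDr.
  by apply/seteqP; split => t /=; rewrite ltrBlDr.
exists (y0' + alpha + k%:R * A) => u hu.
have := split_ineq mZ hind d12 d12 mSI mY mYa (ltW e10) H' u.
rewrite !probE; last 3 first.
- exact: mgt (mTI mZ mSI) _.
- exact: (mgt (measurable_funD (mTI mZ mSI) mYaT)).
- exact: (mgt (measurable_funD (mTI mZ mSI) mYT)).
have -> : prob P [set t | u - (y0' + alpha) < S k t] = 0.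
  apply/eqP; rewrite eq_le prob_ge0 andbT.
  have <- : prob P [set t | k%:R * A < S k t] = 0.
    by rewrite /prob Sk_null.
  apply: prob_le; [exact: mgt (mTI mZ mSI) (u - (y0' + alpha))|exact: mgt (mTI mZ mSI) (k%:R * A)|].
  move=> t /= h; apply: le_lt_trans h.
  move: hu; set K := k%:R * A; move=> hu; lra.
rewrite addr0 -EFinM lee_fin.
have -> : [set t | u < S k t + Y t] = [set t | u < V k t].
  by apply/seteqP; split => t /=; rewrite /V addrC.
have -> : [set t | u < S k t + (Y t + alpha)] = [set t | u - alpha < V k t].
  by apply/seteqP; split => t /=; rewrite /V ltrBlDr addrA [S k t + _]addrC.
move=> h; apply: (le_trans h); rewrite -mulrA ler_wpM2l ?(ltW e0) //.
by rewrite mulrC; exact: ineq1.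
Qed.

Lemma TT0 w : TT 0 w = prob P [set t | w < Y t].
Proof.
by rewrite /TT; congr (prob P _); apply/seteqP; split => t /=; rewrite /V S0 addr0.
Qed.

Lemma TT_ge0 j w : 0 <= TT j w.
Proof. exact: prob_ge0. Qed.

Lemma F2_pos : (forall c, 0 < c -> 0 < Fb c) -> forall u, 0 < u -> 0 < F2 u.
Proof.
move=> Fpos u u0.
have disj : forall o, b1 0 o -> b1 1 o -> False by move=> o -> [].
have mX0 := @mXI (b1 0) 0%N erefl; have mX1 := @mXI (b1 1) 1%N erefl.
have E1 := sig_gt mX0 (u / 2); have E2 := sig_gt mX1 (u / 2).
have := sig_indep mZ hind disj E1 E2.
rewrite !probE; last 3 first.
- exact: mgtT mX1 (u / 2).
- exact: mgtT mX0 (u / 2).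
- by apply: measurableI; [exact: mgtT mX0 (u / 2)|exact: mgtT mX1 (u / 2)].
rewrite -EFinM; case => e.
rewrite -(F2_eq 0).
apply: (@lt_le_trans _ _ (prob P ([set t | u / 2 < X 0%N t] `&` [set t | u / 2 < X 1%N t]))).
  rewrite e (Fb_eq 0) (Fb_eq 1); apply: mulr_gt0; apply: Fpos; exact: divr_gt0.
apply: prob_le.
- by apply: measurableI; [exact: mgtT mX0 (u / 2)|exact: mgtT mX1 (u / 2)].
- have mX01 : measurable_fun setT ((fun t => X 0%N t + X 1%N t) : TI Z (b2 0) -> R).
    by apply: measurable_realfun.measurable_funD; apply: mXI; [left|right].
  exact: mgtT mX01 u.
- by move=> t /= [h1 h2]; rewrite {1}(splitr u); exact: ltrD.
Qed.

Lemma case_i_B a : light_tail_i (X 0%N) -> 0 < a ->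
  (forall u : R, 0 < u -> 0 < prob P [set t | u < Y t]) ->
  (prob P [set t | u + a < Y t] / prob P [set t | u < Y t]) @[u --> +oo] --> 0 ->
  forall j c eps, 0 < eps -> exists M, forall u, M <= u ->
    TT j (u - c) <= eps * TT j.+2 u.
Proof.
move=> [Fpos Xlim] a0 Ypos Ylim.
have Fpos' : forall c, 0 < c -> 0 < Fb c by exact: Fpos.
have Hlt : forall eps, 0 < eps -> exists v0, forall y, v0 <= y -> Fb y <= eps * F2 y.
  by move=> eps e0; exact: (ratio_ev (f := Fb) (g := F2) Xlim (F2_pos Fpos') e0).
elim => [|j IH] c eps e0.
- set c' := `|c| + 1.
  have cc' : c <= c' by rewrite /c'; have := ler_norm c; lra.
  have c'0 : 0 < c' by rewrite /c'; have := normr_ge0 c; lra.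
  set t := (c' + a) / 2.
  have t0 : 0 < t by rewrite /t; lra.
  have F0 := Fpos' t t0.
  have e20 : 0 < eps * (Fb t * Fb t) by apply: mulr_gt0 => //; exact: mulr_gt0.
  have [y0 Hy] := ratio_ev (f := fun u => prob P [set t | u + a < Y t])
    (g := fun u => prob P [set t | u < Y t]) Ylim Ypos e20.
  exists (y0 + c' + a) => u hu.
  have h1 : TT 0 (u - c) <= TT 0 (u - c') by apply: mono; lra.
  have h2 : TT 0 (u - c') <= eps * (Fb t * Fb t) * TT 0 (u - t - t).
    rewrite !TT0.
    have -> : u - t - t = u - c' - a by rewrite /t; lra.
    have -> : u - c' = u - c' - a + a by lra.
    rewrite [X in _ <= _ * prob P [set t0 | X < Y t0]](_ : _ = u - c' - a); last by lra.
    apply: Hy; lra.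
  have h3 := ineq1 0 (u - t) t.
  have h4 := ineq1 1 u t.
  have h5 : TT 0 (u - t - t) * Fb t * Fb t <= TT 2 u.
    apply: le_trans h4; apply: ler_wpM2r; [exact: ltW|exact: h3].
  have := TT_ge0 0 (u - t - t); have := TT_ge0 2 u.
  move: h1 h2 h5; set x1 := TT 0 (u - c); set x2 := TT 0 (u - c');
    set x3 := TT 0 (u - t - t); set x4 := TT 2 u; set F := Fb t.
  move=> h1 h2 h5 g4 g3; nra.
- set c' := `|c| + 1.
  have cc' : c <= c' by rewrite /c'; have := ler_norm c; lra.
  have c'0 : 0 < c' by rewrite /c'; have := normr_ge0 c; lra.
  have F10 := Fpos' c' c'0.
  have G0 := Fpos' 1 ltr01.
  have e10 : 0 < eps * Fb c' / 2 by apply: divr_gt0 => //; exact: mulr_gt0.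
  have [v0 Hv] := Hlt _ e10.
  have e30 : 0 < eps * Fb 1 / 2 by apply: divr_gt0 => //; exact: mulr_gt0.
  have [M HM] := IH (c + v0) _ e30.
  exists M => u hu.
  have h1 := split1 (ltW e10) Hv j (u - c).
  have h2 : TT j.+2 (u - c) <= TT j.+2 (u - c') by apply: mono; lra.
  have h3 := ineq1 j.+2 u c'.
  have h4 := HM u hu.
  have h5 : TT j.+2 u <= TT j.+2 (u - 1) by apply: mono; lra.
  have h6 := ineq1 j.+2 u 1.
  have := TT_ge0 j.+2 (u - c); have := TT_ge0 j.+2 u; have := TT_ge0 j.+2 (u - c').
  have := TT_ge0 j.+2 (u - 1).
  move: h1 h2 h3 h4 h5 h6.
  rewrite -(_ : u - c - v0 = u - (c + v0)); last by lra.
  set y1 := TT j.+1 (u - c); set y2 := TT j.+2 (u - c); set y3 := TT j.+2 (u - c');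
  set y4 := TT j.+3 u; set y5 := TT j (u - c - v0); set y6 := TT j.+2 u;
  set y7 := TT j.+2 (u - 1); set F1 := Fb c'; set G := Fb 1.
  move=> h1 h2 h3 h4 h5 h6 g7 g3 g6 g2.
  have p1 : 0 <= eps * F1 / 2 by apply: divr_ge0 => //; apply: mulr_ge0; exact: ltW.
  have p2 : 0 <= eps * G / 2 by apply: divr_ge0 => //; apply: mulr_ge0; exact: ltW.
  have k1 : eps * F1 / 2 * y2 <= eps / 2 * y4 by nra.
  have k2 : eps * G / 2 * y6 <= eps / 2 * y4 by nra.
  lra.
Qed.

Lemma case_i_A a : light_tail_i (X 0%N) -> 0 < a ->
  (forall u : R, 0 < u -> 0 < prob P [set t | u < Y t]) ->
  (prob P [set t | u + a < Y t] / prob P [set t | u < Y t]) @[u --> +oo] --> 0 ->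
  forall k, (0 < k)%N -> forall eps, 0 < eps -> exists M, forall u, M <= u ->
    TT k u <= eps * TT k.+1 u.
Proof.
move=> hlt a0 Ypos Ylim [//|j] _ eps e0.
have [Fpos Xlim] := hlt.
have Fpos' : forall c, 0 < c -> 0 < Fb c by exact: Fpos.
have e2 : 0 < eps / 2 by exact: divr_gt0.
have [v0 Hv] := ratio_ev (f := Fb) (g := F2) Xlim (F2_pos Fpos') e2.
have [M HM] := case_i_B hlt a0 Ypos Ylim j v0 e2.
exists M => u hu.
have h1 := split1 (ltW e2) Hv j u.
have h2 := HM u hu.
lra.
Qed.

Lemma main_thm a :
  (light_tail_i (X 0%N) \/
   exists A alpha : R, light_tail_ii P (X 0%N) A alpha /\ a <= alpha) ->
  condP P Y a ->
  forall k : nat, (0 < k)%N -> (TT k u / TT k.+1 u) @[u --> +oo] --> 0.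
Proof.
move=> hl [a0 [Ypos Ylim]] k k0.
apply: ev_ratio; [exact: TT_ge0|exact: TT_ge0|].
case: hl => [hlt|[A [al [hii aal]]]].
- exact: case_i_A hlt a0 Ypos Ylim k k0.
- exact: case_ii hii aal Ypos Ylim.
Qed.

End Main.

Theorem lemma2 (d : measure_display) (T : measurableType d) (R : realType)
  (P : probability T R) (X : nat -> {RV P >-> R}) (Y : {RV P >-> R}) (a : R) :
  (* X_1, X_2, ... identically distributed *)
  (forall (i : nat) (B : set R), measurable B ->
     P (X i @^-1` B) = P (X 0%N @^-1` B)) ->
  (* Y, X_1, X_2, ... mutually independent *)
  mutually_independent P (join_family Y (fun i => X i : T -> R)) ->
  (* light right tail, with a <= alpha in case (ii) *)
  (light_tail_i (X 0%N) \/
   exists A alpha : R, light_tail_ii P (X 0%N) A alpha /\ a <= alpha) ->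
  condP P Y a ->
  forall k : nat, (0 < k)%N ->
    (prob P [set t | u < Y t + partial_sum (fun i => X i : T -> R) k t] /
     prob P [set t | u < Y t + partial_sum (fun i => X i : T -> R) k.+1 t])
      @[u --> +oo] --> 0.
Proof.
move=> hid hind hl hP k k0.
exact: (main_thm hid hind hl hP k0).
Qed.
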